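(* Let $A$ be a reflexive, Fréchet smooth normed vector space over $\mathbb C$, with $A^\vee$ given the dual norm. Then on $\mathrm{Max}\,A$ the topology generated by the sets $\mathbf U_r(a)=\{V\in\mathrm{Max}\,A:d(a,V)>r\}$, $a\in A$, $r>0$, coincides with the topology consisting of the sets $\{V\in\mathrm{Max}\,A:F(V)\in\mathcal U\}$, with $\mathcal U\subset\mathrm{Sub}\,A^\vee$ open in the lower Vietoris topology of $A^\vee$.
   Context: $\mathrm{Max}\,A$ is the set of closed subspaces of $A$; $A^\vee$ the continuous dual; $F(V)=\{\phi\in A^\vee:\phi|_V=0\}$. The lower Vietoris topology on the set $\mathrm{Sub}\,A^\vee$ of subspaces of $A^\vee$ is generated by $\{\mathcal V:\mathcal V\cap\mathcal O\ne\emptyset\}$, $\mathcal O\subset A^\vee$ norm-open. $A$ is Fréchet smooth if for every $a$ with $\|a\|=1$ the limit $\lim_{\delta\to0}(\|a-\delta b\|-\|a\|)/\delta$ exists uniformly in $b$ with $\|b\|=1$. *)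

(* Defs.v *)
From HB Require Import structures.
From mathcomp Require Import all_boot all_order all_algebra.
From mathcomp Require Import all_classical all_reals all_analysis.
From mathcomp Require Import complex.
Set Implicit Arguments. Unset Strict Implicit. Unset Printing Implicit Defensive.
Import Order.TTheory GRing.Theory Num.Theory ComplexField.
Import numFieldNormedType.Exports.
Local Open Scope classical_set_scope.
Local Open Scope ring_scope.

Section Defs.
Variable R : realType.
Local Notation C := (R[i]).
Variable A : normedModType C.

(* real-valued norm (the C-valued norm of A is real) *)
Definition rnorm (x : A) : R := complex.Re `|x|.

(* topology on a subset X of T generated by the subbasis S (intersected with X):
   W is open iff W is contained in X and every point of W has a neighbourhood
   X ∩ S_1 ∩ ... ∩ S_n (n >= 0, S_i in S) contained in W. *)
Definition gen_open (T : Type) (X : set T) (S : set (set T)) (W : set T) : Prop :=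
  W `<=` X /\
  forall x, W x -> exists (n : nat) (f : 'I_n -> set T),
    (forall i, S (f i)) /\ (forall i, f i x) /\
    (forall y, X y -> (forall i, f i y) -> W y).

Definition is_subspace (V : set A) : Prop :=
  V 0 /\ (forall x y, V x -> V y -> V (x + y)) /\
  (forall (c : C) x, V x -> V (c *: x)).

Definition MaxA : set (set A) := [set V | is_subspace V /\ closed V].

Definition dist (a : A) (V : set A) : R := inf [set rnorm (a - v) | v in V].

Definition Uset (r : R) (a : A) : set (set A) := [set V | MaxA V /\ r < dist a V].

Definition Usubbasis : set (set (set A)) :=
  [set U | exists (a : A) (r : R), 0 < r /\ U = Uset r a].

Definition dual : set (A -> C) :=
  [set phi | (forall x y, phi (x + y) = phi x + phi y) /\
             (forall (c : C) x, phi (c *: x) = c * phi x) /\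
             continuous (phi : A -> (C : numFieldType)^o)].

Definition dnorm (phi : A -> C) : R :=
  sup [set complex.Re `|phi a| | a in [set a : A | rnorm a <= 1]].

Definition dsub (phi psi : A -> C) : A -> C := fun x => phi x - psi x.
Definition dadd (phi psi : A -> C) : A -> C := fun x => phi x + psi x.
Definition dscale (c : C) (phi : A -> C) : A -> C := fun x => c * phi x.

(* Sub A^∨ : all (not necessarily closed) linear subspaces of A^∨ *)
Definition SubDual : set (set (A -> C)) :=
  [set W | W `<=` dual /\ W (fun _ => 0) /\
           (forall phi psi, W phi -> W psi -> W (dadd phi psi)) /\
           (forall c phi, W phi -> W (dscale c phi))].

Definition dual_open (O : set (A -> C)) : Prop :=
  O `<=` dual /\
  forall phi, O phi -> exists e : R, 0 < e /\
    forall psi, dual psi -> dnorm (dsub psi phi) < e -> O psi.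

Definition LVsubbasis : set (set (set (A -> C))) :=
  [set UU | exists O, dual_open O /\
     UU = [set W | SubDual W /\ exists phi, W phi /\ O phi]].

Definition LV_open (UU : set (set (A -> C))) : Prop :=
  gen_open SubDual LVsubbasis UU.

Definition annih (V : set A) : set (A -> C) :=
  [set phi | dual phi /\ forall v, V v -> phi v = 0].

Definition reflexive_space : Prop :=
  forall Phi : (A -> C) -> C,
    (forall phi psi, dual phi -> dual psi -> Phi (dadd phi psi) = Phi phi + Phi psi) ->
    (forall c phi, dual phi -> Phi (dscale c phi) = c * Phi phi) ->
    (exists M : R, forall phi, dual phi -> complex.Re `|Phi phi| <= M * dnorm phi) ->
    exists a : A, forall phi, dual phi -> Phi phi = phi a.

Definition frechet_smooth : Prop :=
  forall a : A, rnorm a = 1 ->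
    exists L : A -> R, forall e : R, 0 < e -> exists eta : R, 0 < eta /\
      forall (b : A) (d : R), rnorm b = 1 -> d != 0 -> `|d| < eta ->
        `|(rnorm (a - (d%:C)%C *: b) - rnorm a) / d - L b| < e.

End Defs.

(* Main.v *)
Require Import Defs.
From HB Require Import structures.
From mathcomp Require Import all_boot all_order all_algebra.
From mathcomp Require Import all_classical all_reals all_analysis.
From mathcomp Require Import complex ring lra.
Import Order.TTheory GRing.Theory Num.Theory ComplexField.
Import numFieldNormedType.Exports.
Local Open Scope classical_set_scope.
Local Open Scope ring_scope.
Local Open Scope complex_scope.
Set Implicit Arguments. Unset Strict Implicit. Unset Printing Implicit Defensive.

Section Cab.
Variable R : realType.
Local Notation C := (R[i]).

Definition cab (z : C) : R := complex.Re `|z|.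

Lemma normcab (z : C) : `|z| = (cab z)%:C.
Proof. by rewrite /cab normc_def. Qed.

Lemma cab_ge0 (z : C) : 0 <= cab z.
Proof. by have := normr_ge0 z; rewrite normcab -[0 : C]/(0%:C) lecR. Qed.

Lemma cabM (z w : C) : cab (z * w) = cab z * cab w.
Proof. by apply: complexI; rewrite rmorphM /= -!normcab normrM. Qed.

Lemma cabD (z w : C) : cab (z + w) <= cab z + cab w.
Proof. by have := ler_normD z w; rewrite !normcab -rmorphD lecR. Qed.

Lemma cabN (z : C) : cab (- z) = cab z.
Proof. by apply: complexI; rewrite -!normcab normrN. Qed.

Lemma cabR (r : R) : cab r%:C = `|r|.
Proof.
rewrite /cab normc_def /= expr0n /= addr0 sqrtr_sqr //.
Qed.

Lemma cab0 : cab 0 = 0.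
Proof. by rewrite -[0 : C]/(0%:C) cabR normr0. Qed.

Lemma cab_eq0 (z : C) : (cab z == 0) = (z == 0).
Proof. by rewrite -(inj_eq (@complexI _)) -normcab normr_eq0. Qed.

Lemma Re_le_cab (z : C) : complex.Re z <= cab z.
Proof.
case: z => a b; rewrite /cab normc_def /=.
apply: le_trans (ler_norm a) _.
rewrite -sqrtr_sqr ler_wsqrtr // lerDl sqr_ge0 //.
Qed.

Lemma cabi : cab 'i%C = 1.
Proof. by rewrite /cab normc_def /= expr0n expr1n /= add0r sqrtr1. Qed.

Lemma ReM_real (r : R) (z : C) : complex.Re (r%:C * z) = r * complex.Re z.
Proof. by case: z => a b /=; rewrite mul0r subr0. Qed.

Lemma Re_real (r : R) : complex.Re r%:C = r.
Proof. by []. Qed.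

Lemma cab_unit (z : C) : z != 0 -> cab (`|z| / z) = 1.
Proof.
move=> z0; have c0 : cab z != 0 by rewrite cab_eq0.
have h : cab z * cab (`|z| / z) = cab z * 1.
  by rewrite -cabM mulrCA mulfV // !mulr1 normcab cabR ger0_norm ?cab_ge0.
by apply: (mulfI c0); rewrite h.
Qed.

End Cab.
Section RealHB.
Variables (R : realType) (X : lmodType R[i]).
Variables (D : set X) (p : X -> R).
Hypothesis D0 : D 0.
Hypothesis DD : forall x y, D x -> D y -> D (x + y).
Hypothesis DZ : forall c x, D x -> D (c *: x).
Hypothesis pD : forall x y, D x -> D y -> p (x + y) <= p x + p y.
Hypothesis pZ : forall r x, 0 <= r -> D x -> p (r%:C *: x) = r * p x.
Variables (S : set X) (f : X -> R).
Hypothesis SD : forall x, S x -> D x.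
Hypothesis S0 : S 0.
Hypothesis SA : forall x y, S x -> S y -> S (x + y).
Hypothesis SZ : forall r x, S x -> S (r%:C *: x).
Hypothesis fA : forall x y, S x -> S y -> f (x + y) = f x + f y.
Hypothesis fZ : forall r x, S x -> f (r%:C *: x) = r * f x.
Hypothesis fp : forall x, S x -> f x <= p x.

Definition good (G : set (X * R)) :=
  [/\ (forall x y1 y2, G (x, y1) -> G (x, y2) -> y1 = y2),
      (forall x y x' y', G (x, y) -> G (x', y') -> G (x + x', y + y')),
      (forall r x y, G (x, y) -> G (r%:C *: x, r * y)),
      (forall x y, G (x, y) -> D x /\ y <= p x) &
      (forall x, S x -> G (x, f x))].

Lemma chain_good (F : set (set (X * R))) :
  F `<=` (fun G => G = set0 \/ good G) -> total_on F subset ->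
  (\bigcup_(G in F) G) = set0 \/ good (\bigcup_(G in F) G).
Proof.
move=> FP Ftot.
have [[G0 [FG0 gG0]]|no] := pselect (exists G, F G /\ good G); last first.
  left; apply/seteqP; split => // z [G FG Gz].
  have [G0|gG] := FP G FG; first by rewrite G0 in Gz.
  by exfalso; apply: no; exists G.
right.
have common : forall a b, (\bigcup_(G in F) G) a -> (\bigcup_(G in F) G) b ->
    exists H, [/\ F H, good H, H a & H b].
  move=> a b [G1 FG1 G1a] [G2 FG2 G2b].
  have [G12|G21] := Ftot _ _ FG1 FG2.
    have [E|gG2] := FP G2 FG2; first by rewrite E in G2b.
    by exists G2; split => //; exact: G12.
  have [E|gG1] := FP G1 FG1; first by rewrite E in G1a.
  by exists G1; split => //; exact: G21.
split.
- move=> x y1 y2 U1 U2; have [H [_ [Hf _ _ _ _] H1 H2]] := common _ _ U1 U2.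
  exact: Hf H1 H2.
- move=> x y x' y' U1 U2; have [H [FH [_ Ha _ _ _] H1 H2]] := common _ _ U1 U2.
  by exists H => //; exact: Ha.
- move=> r x y U1; have [H [FH [_ _ Hs _ _] H1 _]] := common _ _ U1 U1.
  by exists H => //; exact: Hs.
- move=> x y U1; have [H [FH [_ _ _ Hd _] H1 _]] := common _ _ U1 U1.
  exact: Hd.
- move=> x Sx; exists G0 => //; by case: gG0 => _ _ _ _; apply.
Qed.

Lemma graphf_good : good [set z | S z.1 /\ z.2 = f z.1].
Proof.
split.
- by move=> x y1 y2 /= [_ ->] [_ ->].
- by move=> x y x' y' /= [Sx ->] [Sx' ->]; split; [exact: SA|rewrite fA].
- by move=> r x y /= [Sx ->]; split; [exact: SZ|rewrite fZ].
- by move=> x y /= [Sx ->]; split; [exact: SD|exact: fp].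
- by move=> x Sx.
Qed.

Section Extend.
Variable A : set (X * R).
Hypothesis gA : good A.
Variable x0 : X.
Hypothesis Dx0 : D x0.
Hypothesis nx0 : ~ exists y, A (x0, y).

Let Afun : forall x y1 y2, A (x, y1) -> A (x, y2) -> y1 = y2.
Proof. by case: gA. Qed.
Let Aadd : forall x y x' y', A (x, y) -> A (x', y') -> A (x + x', y + y').
Proof. by case: gA. Qed.
Let Ascl : forall r x y, A (x, y) -> A (r%:C *: x, r * y).
Proof. by case: gA. Qed.
Let Adom : forall x y, A (x, y) -> D x /\ y <= p x.
Proof. by case: gA. Qed.
Let Aext : forall x, S x -> A (x, f x).
Proof. by case: gA. Qed.

Let A00 : A (0, 0).
Proof. by have := Ascl 0 (Aext S0); rewrite scale0r mul0r. Qed.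

Let Aopp x y : A (x, y) -> A (- x, - y).
Proof.
move=> /(Ascl (-1)); rewrite mulN1r rmorphN rmorph1 scaleN1r //.
Qed.

Let DN x : D x -> D (- x).
Proof. by move=> Dx; rewrite -scaleN1r; exact: DZ. Qed.

Let key s1 y1 s2 y2 : A (s1, y1) -> A (s2, y2) ->
  y1 - p (s1 - x0) <= p (s2 + x0) - y2.
Proof.
move=> A1 A2; have [D12 le12] := Adom (Aadd A1 A2).
have [D1 _] := Adom A1; have [D2 _] := Adom A2.
have : p (s1 + s2) <= p (s1 - x0) + p (s2 + x0).
  have -> : s1 + s2 = (s1 - x0) + (s2 + x0) by rewrite addrACA addNr addr0.
  by apply: pD; apply: DD => //; exact: DN.
move: le12 => /= le12 le3; lra.
Qed.

Let E := [set z | exists s y, A (s, y) /\ z = y - p (s - x0)].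
Let c := sup E.

Let hsE : has_sup E.
Proof.
split; first by exists (0 - p (0 - x0)); exists 0, 0.
exists (p (0 + x0) - 0) => z [s [y [Asy ->]]]; exact: key.
Qed.

Let c_ge s y : A (s, y) -> y - p (s - x0) <= c.
Proof. by move=> Asy; apply: sup_upper_bound => //; exists s, y. Qed.

Let c_le s y : A (s, y) -> c <= p (s + x0) - y.
Proof.
move=> Asy; apply: ge_sup; first by case: hsE.
by move=> z [s' [y' [Asy' ->]]]; exact: key.
Qed.

Let B := [set z | exists s y t, A (s, y) /\ z = (s + t%:C *: x0, y + t * c)].

Let uniqt s y t s' y' t' : A (s, y) -> A (s', y') ->
  s + t%:C *: x0 = s' + t'%:C *: x0 -> t = t'.
Proof.
move=> A1 A2 E1; apply/eqP; apply/negP => /negP tt; apply: nx0.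
have tt0 : t - t' != 0 by rewrite subr_eq0.
exists ((t - t')^-1 * (y' - y)).
have -> : x0 = ((t - t')^-1)%:C *: (s' - s).
  have -> : s' - s = (t - t')%:C *: x0.
    rewrite rmorphB scalerBl; apply: (addrI s); apply: (addIr (t'%:C *: x0)).
    by rewrite [s + (s' - s)]addrC subrK addrA subrK E1.
  by rewrite scalerA -rmorphM mulVf // scale1r.
apply: Ascl; apply: Aadd => //; exact: Aopp.
Qed.

Lemma extend_good : good B /\ A `<` B.
Proof.
split; last first.
  split; first by move=> [s y] Asy; exists s, y, 0; rewrite scale0r addr0 mul0r addr0.
  move=> BA; apply: nx0; exists c.
  by apply: BA; exists 0, 0, 1; rewrite scale1r add0r mul1r add0r.
split.
- move=> x y1 y2 [s [y [t [Asy [-> ->]]]]] [s' [y' [t' [Asy' []]]]].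
  move=> Ex ->; have tt := uniqt Asy Asy' Ex; subst t'.
  have ss : s = s' by move/addIr: Ex.
  by subst s'; rewrite (Afun Asy Asy').
- move=> x y x' y' [s [yy [t [Asy [-> ->]]]]] [s' [yy' [t' [Asy' [-> ->]]]]].
  exists (s + s'), (yy + yy'), (t + t'); split; first exact: Aadd.
  congr pair; first by rewrite rmorphD scalerDl !addrA; congr (_ + _); rewrite addrAC.
  by rewrite mulrDl !addrA; congr (_ + _); rewrite addrAC.
- move=> r x y [s [yy [t [Asy [-> ->]]]]].
  exists (r%:C *: s), (r * yy), (r * t); split; first exact: Ascl.
  by rewrite scalerDr scalerA -rmorphM mulrDr mulrA.
- move=> x y [s [yy [t [Asy [-> ->]]]]]; have [Ds le0] := Adom Asy.
  split; first by apply: DD => //; exact: DZ.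
  have [t0|t0|->] := ltgtP t 0; last first.
  + by rewrite scale0r addr0 mul0r addr0.
  +
    have A1 := Ascl (t^-1) Asy.
    have := c_le A1.
    have [D1 _] := Adom A1.
    have -> : s + t%:C *: x0 = t%:C *: (t^-1%:C *: s + x0).
      by rewrite scalerDr scalerA -rmorphM mulfV ?gt_eqF // scale1r.
    rewrite pZ; [|exact: ltW|exact: DD].
    move=> h; have := ler_wpM2l (ltW t0) h.
    rewrite mulrBr mulrA mulfV ?gt_eqF // mul1r; lra.
  +
    set u := - t.
    have u0 : 0 < u by rewrite /u oppr_gt0.
    have A1 := Ascl (u^-1) Asy.
    have := c_ge A1.
    have [D1 _] := Adom A1.
    have -> : s + t%:C *: x0 = u%:C *: (u^-1%:C *: s - x0).
      rewrite scalerDr scalerA -rmorphM mulfV ?gt_eqF // scale1r.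
      by rewrite scalerN -scaleNr -rmorphN /u opprK.
    rewrite pZ; [|exact: ltW|by apply: DD => //; exact: DN].
    move=> h; have := ler_wpM2l (ltW u0) h.
    rewrite mulrBr mulrA mulfV ?gt_eqF // mul1r /u; lra.
- move=> x Sx; exists x, (f x), 0; split; first exact: Aext.
  by rewrite scale0r addr0 mul0r addr0.
Qed.

End Extend.

Lemma real_HB : exists g : X -> R,
  [/\ (forall x y, D x -> D y -> g (x + y) = g x + g y),
      (forall r x, D x -> g (r%:C *: x) = r * g x),
      (forall x, D x -> g x <= p x) &
      (forall x, S x -> g x = f x)].
Proof.
have [A [PA Amax]] := @Zorn_bigcup _ (fun G => G = set0 \/ good G) chain_good.
have gA : good A.
  case: PA => // A0; exfalso.
  apply: (Amax [set z | S z.1 /\ z.2 = f z.1]); last exact: (or_intror graphf_good).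
  rewrite A0; split => // sub.
  by have := sub (0, f 0) (conj S0 erefl).
have tot : forall x, D x -> exists y, A (x, y).
  move=> x Dx; apply: contrapT => nx.
  have [gB AB] := extend_good gA Dx nx.
  exact: Amax _ AB (or_intror gB).
case: gA => Afun Aadd Ascl Adom Aext.
pose g x := xget 0 [set y | A (x, y)].
have gP : forall x, D x -> A (x, g x).
  by move=> x Dx; exact: (xgetPex 0 (tot x Dx)).
exists g; split.
- move=> x y Dx Dy; apply: Afun; first exact: gP (DD Dx Dy).
  exact: Aadd (gP _ Dx) (gP _ Dy).
- move=> r x Dx; apply: Afun; first exact: gP (DZ _ Dx).
  exact: Ascl (gP _ Dx).
- by move=> x Dx; have [_] := Adom _ _ (gP _ Dx).
- by move=> x Sx; apply: Afun; [exact: gP (SD Sx)|exact: Aext].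
Qed.

End RealHB.

Section ComplexHB.
Variables (R : realType) (X : lmodType R[i]).
Variables (D : set X) (p : X -> R).
Hypothesis D0 : D 0.
Hypothesis DD : forall x y, D x -> D y -> D (x + y).
Hypothesis DZ : forall c x, D x -> D (c *: x).
Hypothesis pD : forall x y, D x -> D y -> p (x + y) <= p x + p y.
Hypothesis pZ : forall c x, D x -> p (c *: x) = cab c * p x.
Variables (S : set X) (f : X -> R[i]).
Hypothesis SD : forall x, S x -> D x.
Hypothesis S0 : S 0.
Hypothesis SA : forall x y, S x -> S y -> S (x + y).
Hypothesis SZ : forall c x, S x -> S (c *: x).
Hypothesis fA : forall x y, S x -> S y -> f (x + y) = f x + f y.
Hypothesis fZ : forall c x, S x -> f (c *: x) = c * f x.
Hypothesis fp : forall x, S x -> cab (f x) <= p x.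

Lemma Re_i_real (r : R) : complex.Re ('i%C * r%:C) = 0.
Proof. by rewrite /= mul0r mulr0 subr0. Qed.

Lemma complex_HB : exists g : X -> R[i],
  [/\ (forall x y, D x -> D y -> g (x + y) = g x + g y),
      (forall c x, D x -> g (c *: x) = c * g x),
      (forall x, D x -> cab (g x) <= p x) &
      (forall x, S x -> g x = f x)].
Proof.
have pZr : forall r x, 0 <= r -> D x -> p (r%:C *: x) = r * p x.
  by move=> r x r0 Dx; rewrite pZ // cabR ger0_norm.
have frA : forall x y, S x -> S y -> complex.Re (f (x + y)) = complex.Re (f x) + complex.Re (f y).
  by move=> x y Sx Sy; rewrite fA // raddfD.
have frZ : forall r x, S x -> complex.Re (f (r%:C *: x)) = r * complex.Re (f x).
  by move=> r x Sx; rewrite fZ // ReM_real.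
have [gr [grA grZ grp grS]] := @real_HB R X D p DD DZ pD pZr S
  (fun x => complex.Re (f x)) SD S0 SA (fun r x Sx => SZ r%:C Sx) frA frZ
  (fun x Sx => le_trans (Re_le_cab (f x)) (fp Sx)).
have grN : forall x, D x -> gr (- x) = - gr x.
  move=> x Dx; have e : (-1 : R[i]) = (-1 : R)%:C by rewrite rmorphN rmorph1.
  rewrite -scaleN1r e grZ //.
  by rewrite mulN1r.
have Di : forall x, D x -> D ('i%C *: x) by move=> x Dx; exact: DZ.
pose h x := (gr x)%:C - 'i%C * (gr ('i%C *: x))%:C.
have hA : forall x y, D x -> D y -> h (x + y) = h x + h y.
  move=> x y Dx Dy; rewrite /h scalerDr !grA //; try exact: Di.
  by rewrite !rmorphD /=; ring.
have hR : forall r x, D x -> h (r%:C *: x) = r%:C * h x.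
  move=> r x Dx; have e : 'i%C *: (r%:C *: x) = r%:C *: ('i%C *: x) by rewrite !scalerA mulrC.
  rewrite /h e !grZ //; last exact: Di.
  by rewrite !rmorphM /=; ring.
have hi : forall x, D x -> h ('i%C *: x) = 'i%C * h x.
  move=> x Dx; rewrite /h scalerA -expr2 sqr_i scaleN1r grN //.
  rewrite rmorphN /= mulrBr mulrA -expr2 sqr_i; ring.
have hZ : forall c x, D x -> h (c *: x) = c * h x.
  move=> c x Dx; rewrite [c]complexE scalerDl -scalerA hA; last 2 first.
  - exact: DZ.
  - by apply: DZ; exact: DZ.
  by rewrite hR // hi ?hR //; [ring|exact: DZ].
have Reh : forall x, complex.Re (h x) = gr x.
  by move=> x; rewrite /h raddfB /= mul0r mulr0 !subr0.
have p0 : forall x, D x -> 0 <= p x.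
  move=> x Dx; have : p (x + - x) <= p x + p (- x) by apply: pD => //; rewrite -scaleN1r; exact: DZ.
  have e : (1 : R[i]) = (1 : R)%:C by rewrite rmorph1.
  rewrite subrr -scaleN1r pZ // cabN e cabR normr1 mul1r.
  have -> : p 0 = 0 by rewrite -(scale0r x) pZ // cab0 mul0r.
  lra.
exists h; split => //.
- move=> x Dx; have [->|z0] := eqVneq (h x) 0; first by rewrite cab0 p0.
  set u := `|h x| / h x.
  have : h (u *: x) = (cab (h x))%:C.
    by rewrite hZ // /u mulfVK // normcab.
  move=> /(congr1 (@complex.Re R)); rewrite Reh /= => e.
  by rewrite -e (le_trans (grp _ _)) //; [exact: DZ|rewrite pZ // cab_unit // mul1r].
- move=> x Sx; rewrite /h !grS //; last exact: SZ.
  rewrite fZ // [_ * f x]mulrC ReiNIm rmorphN /= mulrN opprK.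
  by rewrite [RHS]complexE.
Qed.

End ComplexHB.

Section ASpace.
Variables (R : realType) (A : normedModType R[i]).
Local Notation C := (R[i]).
Local Notation rnorm := (@Defs.rnorm R A).
Local Notation dual := (@Defs.dual R A).
Local Notation dnorm := (@Defs.dnorm R A).
Local Notation dadd := (@Defs.dadd R A).
Local Notation dsub := (@Defs.dsub R A).
Local Notation dscale := (@Defs.dscale R A).

Lemma normA (x : A) : `|x| = (rnorm x)%:C.
Proof. by rewrite /Defs.rnorm RRe_real // ger0_real. Qed.

Lemma rnorm_ge0 (x : A) : 0 <= rnorm x.
Proof. by have := normr_ge0 x; rewrite normA -[0 : C]/(0%:C) lecR. Qed.

Lemma rnormD (x y : A) : rnorm (x + y) <= rnorm x + rnorm y.
Proof. by have := ler_normD x y; rewrite !normA -rmorphD lecR. Qed.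

Lemma rnormZ (c : C) (x : A) : rnorm (c *: x) = cab c * rnorm x.
Proof. by apply: complexI; rewrite -normA normrZ rmorphM /= -normA -normcab. Qed.

Lemma rnormN (x : A) : rnorm (- x) = rnorm x.
Proof. by apply: complexI; rewrite -!normA normrN. Qed.

Lemma rnormB (x y : A) : rnorm (x - y) = rnorm (y - x).
Proof. by rewrite -rnormN opprB. Qed.

Lemma rnorm0 : rnorm 0 = 0.
Proof. by apply: complexI; rewrite -normA normr0. Qed.

Lemma rnorm_eq0 (x : A) : (rnorm x == 0) = (x == 0).
Proof. by rewrite -[x == 0]normr_eq0 normA -[0 : C]/(0%:C) (inj_eq (@complexI _)). Qed.

Definition lin (phi : A -> C) :=
  (forall x y, phi (x + y) = phi x + phi y) /\ (forall (c : C) x, phi (c *: x) = c * phi x).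

Lemma lin0 phi : lin phi -> phi 0 = 0.
Proof. by move=> [_ hZ]; rewrite -(scale0r 0) hZ mul0r. Qed.

Lemma linB phi : lin phi -> forall x y, phi (x - y) = phi x - phi y.
Proof. by move=> [hA hZ] x y; rewrite hA -scaleN1r hZ mulN1r. Qed.

Lemma dual_lin phi : dual phi -> lin phi.
Proof. by case=> hA [hZ _]. Qed.

Lemma dual_bounded phi : dual phi ->
  exists K : R, 0 <= K /\ forall x, cab (phi x) <= K * rnorm x.
Proof.
move=> [hA [hZ hc]].
have l : lin phi by [].
have := hc 0; move=> /cvgrPdist_lt /(_ 1 ltr01) /nbhs_norm0P [e /= e0 he].
have e0' : 0 < complex.Re e.
  by move: e0; rewrite ltcE => /andP [_]; rewrite /=.
have eE : e = (complex.Re e)%:C.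
  by rewrite RRe_real // gtr0_real.
exists (2 / complex.Re e); split; first by rewrite divr_ge0 // ltW.
move=> x; have [->|x0] := eqVneq x 0.
  by rewrite (lin0 l) cab0 rnorm0 mulr0.
have nx0 : 0 < rnorm x by rewrite lt_def rnorm_eq0 x0 rnorm_ge0.
have ix0 : 0 < (rnorm x)^-1 by rewrite invr_gt0.
pose k := complex.Re e / (2 * rnorm x).
have k0 : 0 < k by rewrite /k divr_gt0 // mulr_gt0.
have kx : k * rnorm x = complex.Re e / 2.
  by rewrite /k; field; rewrite ?gt_eqF.
have hk : `|k%:C *: x| < e.
  rewrite normrZ normA normcab cabR gtr0_norm // -rmorphM eE ltcR kx; lra.
have := he _ hk; rewrite /= (lin0 l) sub0r normrN hZ normcab cabM cabR gtr0_norm //.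
rewrite -[1 : C]/(1%:C) ltcR => h.
have -> : 2 / complex.Re e * rnorm x = k^-1 by rewrite /k; field; rewrite ?gt_eqF.
by apply: ltW; rewrite -(ltr_pM2l k0) mulfV ?gt_eqF.
Qed.

Lemma bounded_dual phi : lin phi ->
  (exists K : R, forall x, cab (phi x) <= K * rnorm x) -> dual phi.
Proof.
move=> l [K hK]; have [hA hZ] := l; split => //; split => // x.
apply/cvgrPdist_lt => eps eps0.
have eE : eps = (complex.Re eps)%:C by rewrite RRe_real // gtr0_real.
have E0 : 0 < complex.Re eps by rewrite eE ltcR in eps0.
set K' := `|K| + 1.
have K0 : 0 < K' by rewrite /K' ltr_pwDr.
apply/nbhs_normP; exists ((complex.Re eps / K')%:C).
  by rewrite /= ltcR divr_gt0.
move=> t /=; rewrite normA ltcR => h.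
rewrite -(linB l) normcab eE ltcR.
apply: (le_lt_trans (hK _)); apply: (le_lt_trans (y := K' * rnorm (x - t))).
  by apply: ler_wpM2r; [exact: rnorm_ge0|rewrite /K'; apply: le_trans (ler_norm K) _; rewrite lerDl].
by rewrite mulrC -ltr_pdivlMr.
Qed.

Definition dset (phi : A -> C) := [set complex.Re `|phi a| | a in [set a : A | rnorm a <= 1]].

Lemma dset_has_sup phi : dual phi -> has_sup (dset phi).
Proof.
move=> dp; have [K [K0 hK]] := dual_bounded dp; split.
  by exists (complex.Re `|phi 0|); exists 0 => //=; rewrite rnorm0.
exists K => _ [a /= a1 <-]; apply: le_trans (hK a) _.
by rewrite -[leRHS]mulr1 ler_wpM2l.
Qed.

Lemma dnorm_ge0 phi : dual phi -> 0 <= dnorm phi.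
Proof.
move=> dp; have := sup_upper_bound (dset_has_sup dp).
move=> /(_ (complex.Re `|phi 0|)) h; apply: le_trans (h _).
  exact: cab_ge0.
by exists 0 => //=; rewrite rnorm0.
Qed.

Lemma dnorm_bound phi x : dual phi -> cab (phi x) <= dnorm phi * rnorm x.
Proof.
move=> dp; have l := dual_lin dp.
have [->|x0] := eqVneq x 0; first by rewrite (lin0 l) cab0 rnorm0 mulr0.
have nx0 : 0 < rnorm x by rewrite lt_def rnorm_eq0 x0 rnorm_ge0.
have ix0 : 0 < (rnorm x)^-1 by rewrite invr_gt0.
have h : cab (phi ((rnorm x)^-1%:C *: x)) <= dnorm phi.
  apply: sup_upper_bound; first exact: dset_has_sup.
  exists ((rnorm x)^-1%:C *: x) => //=.
  by rewrite rnormZ cabR (gtr0_norm ix0) mulVf ?gt_eqF.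
move: h; rewrite (proj2 l) cabM cabR (gtr0_norm ix0).
move=> h; have := ler_wpM2r (ltW nx0) h; by rewrite mulrAC mulVf ?gt_eqF // mul1r.
Qed.

Lemma dnorm_le phi (K : R) : dual phi -> 0 <= K ->
  (forall x, cab (phi x) <= K * rnorm x) -> dnorm phi <= K.
Proof.
move=> dp K0 hK; apply: ge_sup; first by case: (dset_has_sup dp).
move=> _ [a /= a1 <-]; apply: le_trans (hK a) _.
by rewrite -[leRHS]mulr1 ler_wpM2l.
Qed.

Lemma dnorm_leRe phi (K : R) : dual phi -> 0 <= K ->
  (forall b, rnorm b = 1 -> complex.Re (phi b) <= K) -> dnorm phi <= K.
Proof.
move=> dp K0 hK; have l := dual_lin dp; apply: dnorm_le => // x.
have [px|px] := eqVneq (phi x) 0.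
  by rewrite px cab0 mulr_ge0 // rnorm_ge0.
have x0 : x != 0 by apply: contraNneq px => ->; rewrite (lin0 l).
have nx0 : 0 < rnorm x by rewrite lt_def rnorm_eq0 x0 rnorm_ge0.
have ix0 : 0 < (rnorm x)^-1 by rewrite invr_gt0.
set u := `|phi x| / phi x.
have := hK ((rnorm x)^-1%:C *: (u *: x)).
rewrite !rnormZ cab_unit // cabR (gtr0_norm ix0) mul1r mulVf ?gt_eqF //.
move=> /(_ erefl); rewrite !(proj2 l) /u mulfVK // normcab -rmorphM /=.
move=> h; have := ler_wpM2r (ltW nx0) h; by rewrite mulrAC mulVf ?gt_eqF // mul1r.
Qed.

Lemma dual_add phi psi : dual phi -> dual psi -> dual (dadd phi psi).
Proof.
move=> dp dq; have [pA pZ] := dual_lin dp; have [qA qZ] := dual_lin dq.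
have [K1 [_ h1]] := dual_bounded dp; have [K2 [_ h2]] := dual_bounded dq.
apply: bounded_dual.
  by split => [x y|c x]; rewrite /Defs.dadd ?pA ?qA ?pZ ?qZ; [ring|ring].
exists (K1 + K2) => x; rewrite /Defs.dadd mulrDl.
by apply: le_trans (cabD _ _) _; apply: lerD.
Qed.

Lemma dual_scale c phi : dual phi -> dual (dscale c phi).
Proof.
move=> dp; have [pA pZ] := dual_lin dp; have [K1 [_ h1]] := dual_bounded dp.
apply: bounded_dual.
  by split => [x y|d x]; rewrite /Defs.dscale ?pA ?pZ; [ring|ring].
exists (cab c * K1) => x; rewrite /Defs.dscale cabM -mulrA.
by apply: ler_wpM2l => //; exact: cab_ge0.
Qed.

Lemma dual_zero : dual (fun _ => 0).
Proof.
apply: bounded_dual; first by split => *; rewrite ?addr0 ?mulr0.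
by exists 0 => x; rewrite cab0 mul0r.
Qed.

Lemma dual_sub phi psi : dual phi -> dual psi -> dual (dsub phi psi).
Proof.
move=> dp dq; have := dual_add dp (dual_scale (-1) dq).
by congr dual; apply: funext => x; rewrite /Defs.dadd /Defs.dsub /Defs.dscale mulN1r.
Qed.

Lemma dnormD phi psi : dual phi -> dual psi ->
  dnorm (dadd phi psi) <= dnorm phi + dnorm psi.
Proof.
move=> dp dq; apply: dnorm_le; first exact: dual_add.
  by apply: addr_ge0; exact: dnorm_ge0.
move=> x; rewrite /Defs.dadd mulrDl; apply: le_trans (cabD _ _) _.
by apply: lerD; exact: dnorm_bound.
Qed.

Lemma dnormZ c phi : dual phi -> dnorm (dscale c phi) = cab c * dnorm phi.
Proof.
move=> dp; apply/eqP; rewrite eq_le; apply/andP; split.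
  apply: dnorm_le; first exact: dual_scale.
    by apply: mulr_ge0; [exact: cab_ge0|exact: dnorm_ge0].
  by move=> x; rewrite /Defs.dscale cabM -mulrA; apply: ler_wpM2l; [exact: cab_ge0|exact: dnorm_bound].
have [->|c0] := eqVneq c 0; first by rewrite cab0 mul0r; apply: dnorm_ge0; exact: dual_scale.
have cc0 : 0 < cab c by rewrite lt_def cab_eq0 c0 cab_ge0.
rewrite -ler_pdivlMl //.
apply: dnorm_le => //; first by apply: mulr_ge0; [rewrite invr_ge0; exact: ltW|apply: dnorm_ge0; exact: dual_scale].
move=> x; have := dnorm_bound x (dual_scale c dp); rewrite /Defs.dscale cabM => h.
by rewrite -(ler_pM2l cc0) !mulrA mulfV ?gt_eqF // mul1r.
Qed.

Lemma dnorm0 : dnorm (fun _ => 0) = 0.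
Proof.
apply/eqP; rewrite eq_le dnorm_ge0 ?andbT; last exact: dual_zero.
by apply: dnorm_le => //; [exact: dual_zero|move=> x; rewrite cab0 mul0r].
Qed.

Lemma dnorm_pos phi x : dual phi -> phi x != 0 -> 0 < dnorm phi.
Proof.
move=> dp px; rewrite lt_def dnorm_ge0 // andbT; apply/eqP => d0.
have := dnorm_bound x dp; rewrite d0 mul0r => h.
by move: px; rewrite -cab_eq0 eq_le h cab_ge0.
Qed.

End ASpace.

Section Dist.
Variables (R : realType) (A : normedModType R[i]).
Local Notation C := (R[i]).
Local Notation rnorm := (@Defs.rnorm R A).
Local Notation dual := (@Defs.dual R A).
Local Notation dnorm := (@Defs.dnorm R A).
Local Notation dadd := (@Defs.dadd R A).
Local Notation dsub := (@Defs.dsub R A).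
Local Notation dscale := (@Defs.dscale R A).
Local Notation dist := (@Defs.dist R A).
Local Notation annih := (@Defs.annih R A).

Lemma dist_lb (V : set A) a : has_lbound [set rnorm (a - v) | v in V].
Proof. by exists 0 => _ [v _ <-]; exact: rnorm_ge0. Qed.

Lemma dist_le (V : set A) a v : V v -> dist a V <= rnorm (a - v).
Proof. by move=> Vv; apply: ge_inf; [exact: dist_lb|exists v]. Qed.

Lemma dist_ge (V : set A) a r : V 0 -> (forall v, V v -> r <= rnorm (a - v)) -> r <= dist a V.
Proof.
move=> V0 h; apply: lb_le_inf; first by exists (rnorm (a - 0)), 0.
by move=> _ [v Vv <-]; exact: h.
Qed.

Lemma dist_ge0 (V : set A) a : V 0 -> 0 <= dist a V.
Proof. by move=> V0; apply: dist_ge => // v _; exact: rnorm_ge0. Qed.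

Lemma subsp_opp (V : set A) : is_subspace V -> forall x, V x -> V (- x).
Proof. by move=> [_ [_ hZ]] x Vx; rewrite -scaleN1r; exact: hZ. Qed.

Lemma subsp_sub (V : set A) : is_subspace V -> forall x y, V x -> V y -> V (x - y).
Proof. by move=> hV x y Vx Vy; have [_ [hA _]] := hV; apply: hA => //; exact: subsp_opp. Qed.

Lemma dist_functional (V : set A) a : is_subspace V ->
  exists psi, [/\ annih V psi, dnorm psi <= 1 & psi a = (dist a V)%:C].
Proof.
move=> hV; have [V0 [VA VZ]] := hV.
have d0 := dist_ge0 a V0.
have [dz|dpos] := eqVneq (dist a V) 0.
  exists (fun _ => 0); split.
  - by split; [exact: dual_zero|].
  - by rewrite dnorm0.
  - by rewrite dz.
have dp : 0 < dist a V by rewrite lt_def dpos d0.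
set d := dist a V in d0 dpos dp *.
have aV : ~ V a.
  move=> Va; have := dist_le a Va; rewrite subrr rnorm0 => h.
  by move: dp; rewrite ltNge h.
have uniq : forall x c c', V (x - c *: a) -> V (x - c' *: a) -> c = c'.
  move=> x c c' h1 h2; apply: contrapT => cc.
  have h3 := subsp_sub hV h2 h1.
  have e : (x - c' *: a) - (x - c *: a) = (c - c') *: a.
    by rewrite opprB addrC addrA subrK scalerBl.
  rewrite e in h3; apply: aV.
  have cc0 : c - c' != 0 by rewrite subr_eq0; apply/eqP.
  have := VZ ((c - c')^-1) _ h3; rewrite scalerA mulVf // scale1r //.
pose Sx := [set x | exists c, V (x - c *: a)].
pose f := fun x => xget 0 [set c | V (x - c *: a)] * d%:C.
have fS : forall x c, V (x - c *: a) -> f x = c * d%:C.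
  move=> x c h; rewrite /f (xget_unique 0 (P := [set c | V (x - c *: a)]) h) //.
  by move=> y hy; exact: uniq hy h.
have S0 : Sx 0 by exists 0; rewrite scale0r subrr.
have SA : forall x y, Sx x -> Sx y -> Sx (x + y).
  move=> x y [c hc] [c' hc']; exists (c + c').
  have -> : x + y - (c + c') *: a = (x - c *: a) + (y - c' *: a).
    by rewrite scalerDl opprD addrACA.
  exact: VA.
have SZ : forall k x, Sx x -> Sx (k *: x).
  move=> k x [c hc]; exists (k * c).
  by rewrite -scalerA -scalerBr; exact: VZ.
have fA : forall x y, Sx x -> Sx y -> f (x + y) = f x + f y.
  move=> x y [c hc] [c' hc']; rewrite (fS _ _ hc) (fS _ _ hc') (fS _ (c + c')).
    by rewrite mulrDl.
  by rewrite scalerDl opprD addrACA; exact: VA.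
have fZ : forall k x, Sx x -> f (k *: x) = k * f x.
  move=> k x [c hc]; rewrite (fS _ _ hc) (fS _ (k * c)) ?mulrA //.
  by rewrite -scalerA -scalerBr; exact: VZ.
have fp : forall x, Sx x -> cab (f x) <= rnorm x.
  move=> x [c hc]; rewrite (fS _ _ hc) cabM cabR ger0_norm //.
  have [->|c0] := eqVneq c 0; first by rewrite cab0 mul0r rnorm_ge0.
  set w := x - c *: a in hc.
  have e : x = c *: (a - (- c^-1) *: w).
    by rewrite scalerBr scalerA mulrN mulfV // scaleN1r opprK /w addrC subrK.
  rewrite [in leRHS]e rnormZ; apply: ler_wpM2l; first exact: cab_ge0.
  by apply: dist_le; apply: VZ.
have [g [gA gZ gp gS]] := @complex_HB R A setT rnorm (fun _ _ _ _ => I) (fun _ _ _ => I)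
   (fun x y _ _ => rnormD x y) (fun c x _ => rnormZ c x)
   Sx f (fun _ _ => I) S0 SA SZ fA fZ fp.
have lg : lin g by split => [x y|c x]; [exact: gA|exact: gZ].
have dg : dual g by apply: bounded_dual => //; exists 1 => x; rewrite mul1r; exact: gp.
exists g; split.
- split => // v Vv; rewrite gS; last by exists 0; rewrite scale0r subr0.
  by rewrite (fS _ 0) ?mul0r // scale0r subr0.
- by apply: dnorm_le => // x; rewrite mul1r; exact: gp.
- rewrite gS; last by exists 1; rewrite scale1r subrr.
  by rewrite (fS _ 1) ?mul1r // scale1r subrr.
Qed.

Lemma dadd_E (phi psi : A -> C) : dadd phi psi = phi + psi.
Proof. by apply: funext => x. Qed.

Lemma dscale_E c (phi : A -> C) : dscale c phi = c *: phi.
Proof. by apply: funext => x. Qed.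

Lemma zero_E : (fun _ : A => 0 : C) = 0.
Proof. by apply: funext => x. Qed.

Lemma norming (phi : A -> C) x0 : reflexive_space A -> dual phi -> phi x0 != 0 ->
  exists a, rnorm a = 1 /\ phi a = (dnorm phi)%:C.
Proof.
move=> refl dp px0.
have m0 : 0 < dnorm phi := dnorm_pos dp px0.
set m := dnorm phi in m0 *.
have DD : forall x y : A -> C, dual x -> dual y -> dual (x + y).
  by move=> x y dx dy; rewrite -dadd_E; exact: dual_add.
have DZ : forall c (x : A -> C), dual x -> dual (c *: x).
  by move=> c x dx; rewrite -dscale_E; exact: dual_scale.
have pD : forall x y : A -> C, dual x -> dual y -> dnorm (x + y) <= dnorm x + dnorm y.
  by move=> x y dx dy; rewrite -dadd_E; exact: dnormD.
have pZ : forall c (x : A -> C), dual x -> dnorm (c *: x) = cab c * dnorm x.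
  by move=> c x dx; rewrite -dscale_E; exact: dnormZ.
have uniq : forall c c', c *: phi = c' *: phi -> c = c'.
  move=> c c' /(congr1 (fun g => g x0)) e; exact: (mulIf px0 e).
pose S := [set chi : A -> C | exists c, chi = c *: phi].
pose f := fun chi : A -> C => xget 0 [set c | chi = c *: phi] * m%:C.
have fS : forall c, f (c *: phi) = c * m%:C.
  move=> c; rewrite /f (xget_unique 0 (P := [set c' | c *: phi = c' *: phi]) (x := c)) //.
  by move=> y hy; apply: uniq; rewrite hy.
have SD : forall chi, S chi -> dual chi by move=> _ [c ->]; exact: DZ.
have S0 : S 0 by exists 0; rewrite scale0r.
have SA : forall x y, S x -> S y -> S (x + y).
  by move=> _ _ [c ->] [c' ->]; exists (c + c'); rewrite scalerDl.
have SZ : forall k x, S x -> S (k *: x).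
  by move=> k _ [c ->]; exists (k * c); rewrite scalerA.
have fA : forall x y, S x -> S y -> f (x + y) = f x + f y.
  by move=> _ _ [c ->] [c' ->]; rewrite -scalerDl !fS mulrDl.
have fZ : forall k x, S x -> f (k *: x) = k * f x.
  by move=> k _ [c ->]; rewrite scalerA !fS mulrA.
have fp : forall x, S x -> cab (f x) <= dnorm x.
  by move=> _ [c ->]; rewrite fS pZ // cabM cabR ger0_norm // ltW.
have [Phi [PA PZ Pp PS]] := @complex_HB R [the lmodType C of A -> C] dual dnorm
   DD DZ pD pZ S f SD S0 SA SZ fA fZ fp.
have h1 : forall x y, dual x -> dual y -> Phi (dadd x y) = Phi x + Phi y.
  by move=> x y dx dy; rewrite dadd_E; exact: PA.
have h2 : forall c x, dual x -> Phi (dscale c x) = c * Phi x.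
  by move=> c x dx; rewrite dscale_E; exact: PZ.
have h3 : exists M : R, forall x, dual x -> complex.Re `|Phi x| <= M * dnorm x.
  by exists 1 => x dx; rewrite mul1r; exact: Pp.
have [a ha] := refl Phi h1 h2 h3.
have pa : phi a = m%:C.
  by rewrite -ha // PS; [rewrite -{1}(scale1r phi) fS mul1r|exists 1; rewrite scale1r].
exists a; split => //.
apply/eqP; rewrite eq_le; apply/andP; split.
  have hV : is_subspace [set (0 : A)].
    split => //; split => [x y -> ->|c x ->]; by rewrite ?addr0 ?scaler0.
  have [psi [[dpsi _] npsi psia]] := dist_functional a hV.
  have : dist a [set 0] = rnorm a.
    by rewrite /Defs.dist image_set1 inf1 subr0.
  move=> e; rewrite e in psia.
  have := Pp psi dpsi; rewrite ha // psia cabR ger0_norm ?rnorm_ge0 // => h.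
  exact: le_trans h npsi.
have := dnorm_bound a dp; rewrite pa cabR (gtr0_norm m0) -/m.
by rewrite -{1}(mulr1 m) ler_pM2l.
Qed.

Lemma smulian a phi : frechet_smooth A -> rnorm a = 1 -> dual phi -> dnorm phi <= 1 -> phi a = 1 ->
  forall e : R, 0 < e -> exists del : R, 0 < del /\
  forall psi, dual psi -> dnorm psi <= 1 -> 1 - del < complex.Re (psi a) ->
  dnorm (dsub psi phi) <= e.
Proof.
move=> sm a1 dp np pa1 e e0.
have [L hL] := sm a a1.
have e30 : 0 < e / 3 by rewrite divr_gt0.
have [eta [eta0 heta]] := hL _ e30.
set t := eta / 2.
have t0 : 0 < t by rewrite /t divr_gt0.
have teta : `|t| < eta by rewrite gtr0_norm // /t; lra.
have nteta : `|- t| < eta by rewrite normrN.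
exists (e / 3 * t); split; first by rewrite mulr_gt0.
move=> psi dq nq hpa.
have [pA pZ] := dual_lin dp; have [qA qZ] := dual_lin dq.
apply: dnorm_leRe; [exact: dual_sub|exact: ltW|].
move=> b b1; rewrite /Defs.dsub raddfB /=.
have nt0 : - t != 0 by rewrite oppr_eq0 lt0r_neq0.
have h1 := heta b (- t) b1 nt0 nteta.
have h2 := heta b t b1 (lt0r_neq0 t0) teta.
rewrite rmorphN /= scaleNr opprK a1 in h1; rewrite a1 in h2.
set N1 := rnorm (a + t%:C *: b) in h1.
set N2 := rnorm (a - t%:C *: b) in h2.
set Lb := L b in h1 h2.
set P1 := complex.Re (psi a) in hpa *.
set P2 := complex.Re (psi b).
set F2 := complex.Re (phi b).
have fA : P1 + t * P2 <= N1.
  have := dnorm_bound (a + t%:C *: b) dq.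
  rewrite qA qZ => h.
  have -> : P1 + t * P2 = complex.Re (psi a + t%:C * psi b) by rewrite raddfD /= ReM_real.
  apply: le_trans (Re_le_cab _) _; apply: le_trans h _.
  by rewrite -[leRHS]mul1r ler_wpM2r // rnorm_ge0.
have fB : 1 - t * F2 <= N2.
  have := dnorm_bound (a - t%:C *: b) dp.
  rewrite (linB (dual_lin dp)) pZ pa1 => h.
  have -> : 1 - t * F2 = complex.Re (1 - t%:C * phi b) by rewrite raddfB /= ReM_real.
  apply: le_trans (Re_le_cab _) _; apply: le_trans h _.
  by rewrite -[leRHS]mul1r ler_wpM2r // rnorm_ge0.
move: h1; rewrite ltr_norml => /andP [h1 _].
move: h2; rewrite ltr_norml => /andP [_ h2].
set q1 := (N1 - 1) / - t in h1.
set q2 := (N2 - 1) / t in h2.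
have E1 : N1 - 1 = - (t * q1) by rewrite /q1; field; rewrite lt0r_neq0.
have E2 : N2 - 1 = t * q2 by rewrite /q2; field; rewrite lt0r_neq0.
have h1' : t * (Lb - e / 3) < t * q1 by rewrite ltr_pM2l //; lra.
have h2' : t * q2 < t * (Lb + e / 3) by rewrite ltr_pM2l //; lra.
have : t * (P2 - F2) < t * e.
  rewrite !mulrDr !mulrN in h1' h2' *; lra.
by rewrite ltr_pM2l // => /ltW.
Qed.


End Dist.

Section Main.
Variables (R : realType) (A : normedModType R[i]).
Local Notation C := (R[i]).
Local Notation rnorm := (@Defs.rnorm R A).
Local Notation dual := (@Defs.dual R A).
Local Notation dnorm := (@Defs.dnorm R A).
Local Notation dadd := (@Defs.dadd R A).
Local Notation dsub := (@Defs.dsub R A).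
Local Notation dscale := (@Defs.dscale R A).
Local Notation dist := (@Defs.dist R A).
Local Notation annih := (@Defs.annih R A).
Local Notation MaxA := (@Defs.MaxA R A).
Local Notation Uset := (@Defs.Uset R A).
Local Notation SubDual := (@Defs.SubDual R A).
Local Notation dual_open := (@Defs.dual_open R A).
Local Notation Usubbasis := (@Defs.Usubbasis R A).
Local Notation LV_open := (@Defs.LV_open R A).
Local Notation LVsubbasis := (@Defs.LVsubbasis R A).

Lemma annih_SubDual (V : set A) : SubDual (annih V).
Proof.
split; first by move=> phi [].
split; first by split; [exact: dual_zero|].
split.
  move=> phi psi [dp hp] [dq hq]; split; first exact: dual_add.
  by move=> v Vv; rewrite /Defs.dadd hp // hq // addr0.
move=> c phi [dp hp]; split; first exact: dual_scale.
by move=> v Vv; rewrite /Defs.dscale hp // mulr0.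
Qed.

Definition Oset (a : A) (r : R) := [set phi | dual phi /\ r * dnorm phi < cab (phi a)].

Lemma Oset_open a r : 0 < r -> dual_open (Oset a r).
Proof.
move=> r0; split; first by move=> phi [].
move=> phi [dp hp].
set g := cab (phi a) - r * dnorm phi.
have g0 : 0 < g by rewrite /g subr_gt0.
have k0 : 0 < r + rnorm a + 1 by have := rnorm_ge0 a; lra.
exists (g / (r + rnorm a + 1)); split; first by rewrite divr_gt0.
move=> psi dq hd; split => //.
have dd := dual_sub dq dp.
have h1 := dnorm_bound a dd.
have e1 : psi a = phi a + dsub psi phi a by rewrite /Defs.dsub addrC subrK.
have h2 : cab (phi a) <= cab (psi a) + cab (dsub psi phi a).
  have -> : phi a = psi a - dsub psi phi a by rewrite /Defs.dsub opprB addrC subrK.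
  by apply: le_trans (cabD _ _) _; rewrite cabN.
have e2 : psi = dadd phi (dsub psi phi).
  by apply: funext => x; rewrite /Defs.dadd /Defs.dsub addrC subrK.
have h3 : dnorm psi <= dnorm phi + dnorm (dsub psi phi).
  by rewrite {1}e2; exact: dnormD.
have h4 : dnorm (dsub psi phi) * (r + rnorm a + 1) < g.
  by rewrite -ltr_pdivlMr.
have hn := rnorm_ge0 a.
have hdn := dnorm_ge0 dd.
set D := dnorm (dsub psi phi) in h1 h3 h4 hdn.
have : D * r + D * rnorm a <= D * (r + rnorm a + 1).
  by rewrite -mulrDr ler_wpM2l // lerDl.
rewrite /g in h4; nra.
Qed.

Lemma Oset_dist (V : set A) a r phi : V 0 -> 0 < r -> annih V phi -> Oset a r phi ->
  r < dist a V.
Proof.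
move=> V0 r0 [dp hv] [_ hp].
have m0 : 0 < dnorm phi.
  apply: (dnorm_pos (x := a)) => //; rewrite -cab_eq0; apply: lt0r_neq0.
  apply: le_lt_trans hp; apply: mulr_ge0; [exact: ltW|exact: dnorm_ge0].
apply: (lt_le_trans (y := cab (phi a) / dnorm phi)).
  by rewrite ltr_pdivlMr.
apply: dist_ge => // v Vv.
have := dnorm_bound (a - v) dp; rewrite (linB (dual_lin dp)) (hv v Vv) subr0.
by rewrite ler_pdivrMr // mulrC.
Qed.

Lemma dist_Oset (V : set A) a r : is_subspace V -> 0 < r -> r < dist a V ->
  exists phi, annih V phi /\ Oset a r phi.
Proof.
move=> hV r0 rd; have [psi [[dq hq] nq qa]] := dist_functional a hV.
exists psi; split => //; split => //.
rewrite qa cabR ger0_norm; last exact: (le_trans (ltW r0) (ltW rd)).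
by apply: le_lt_trans rd; rewrite -[leRHS]mulr1 ler_wpM2l // ltW.
Qed.

Lemma closed_dist (V : set A) x0 : V 0 -> closed V -> ~ V x0 -> 0 < dist x0 V.
Proof.
move=> V0 cV nx0.
have [e e0 he] : exists2 e : C, 0 < e & forall v, V v -> e <= `|x0 - v|.
  apply: contrapT => H; apply: nx0; apply: cV => B /nbhs_normP [e e0 hB].
  have : ~ (forall v, V v -> e <= `|x0 - v|) by move=> h; apply: H; exists e.
  move=> /existsNP [v /not_implyP [Vv hv]]; exists v; split => //.
  apply: hB => /=; rewrite real_ltNge; [exact/negP|exact: normr_real|exact: gtr0_real].
have eE : e = (complex.Re e)%:C by rewrite RRe_real // gtr0_real.
have E0 : 0 < complex.Re e by rewrite eE ltcR in e0.
apply: lt_le_trans E0 _; apply: dist_ge => // v Vv.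
by have := he v Vv; rewrite normA {1}eE lecR.
Qed.

Lemma dir1 (W : set (set A)) : gen_open MaxA Usubbasis W ->
  exists UU, LV_open UU /\ W = [set V | MaxA V /\ UU (annih V)].
Proof.
move=> [WX Wloc].
pose UU := [set S | SubDual S /\ exists n (a : 'I_n -> A) (r : 'I_n -> R),
  [/\ (forall i, 0 < r i),
      (forall V, MaxA V -> (forall i, Uset (r i) (a i) V) -> W V) &
      (forall i, exists phi, S phi /\ Oset (a i) (r i) phi)]].
exists UU; split.
  split; first by move=> S [].
  move=> S [SS [n [a [r [r0 hW hO]]]]].
  exists n, (fun i => [set S' | SubDual S' /\ exists phi, S' phi /\ Oset (a i) (r i) phi]).
  split; [|split].
  - by move=> i; exists (Oset (a i) (r i)); split => //; exact: Oset_open.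
  - by move=> i; split => //; exact: hO.
  - move=> S' SS' hS'; split => //; exists n, a, r; split => // i.
    by have [_ ?] := hS' i.
apply/seteqP; split.
  move=> V WV; split; first exact: WX.
  have [n [f [hf [fV hfW]]]] := Wloc V WV.
  have [ar har] := choice (fun i => (hf i : Usubbasis (f i))).
  have [rr hrr] := choice (fun i => har i).
  split; first exact: annih_SubDual.
  exists n, ar, rr; split.
  - by move=> i; have [] := hrr i.
  - move=> V' MV' hV'; apply: hfW => // i.
    by have [_ ->] := hrr i; exact: hV'.
  - move=> i; have [r0 fE] := hrr i.
    have := fV i; rewrite fE => -[MV rd].
    by apply: dist_Oset => //; case: MV.
move=> V [MV [_ [n [a [r [r0 hW hO]]]]]].
apply: hW => // i; split => //.
have [phi [aphi Ophi]] := hO i.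
by apply: Oset_dist aphi Ophi => //; case: MV => -[].
Qed.

Lemma dir2 (UU : set (set (A -> C))) : reflexive_space A -> frechet_smooth A ->
  LV_open UU -> gen_open MaxA Usubbasis [set V | MaxA V /\ UU (annih V)].
Proof.
move=> refl sm [UUsub UUloc]; split; first by move=> V [].
move=> V0 [MV0 UV0].
have [n [f [hf [fS hcl]]]] := UUloc _ UV0.
have [Ob hO] := choice hf.
have meet : forall i, exists phi, annih V0 phi /\ Ob i phi.
  move=> i; have := fS i; rewrite (proj2 (hO i)) => -[_ [phi [p1 p2]]]; by exists phi.
have [ph hph] := choice meet.
have key : forall V, MaxA V -> (forall i, exists chi, annih V chi /\ Ob i chi) ->
    MaxA V /\ UU (annih V).
  move=> V MV h; split => //; apply: hcl; first exact: annih_SubDual.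
  move=> i; rewrite (proj2 (hO i)); split; first exact: annih_SubDual.
  by have [chi [c1 c2]] := h i; exists chi.
have zann : forall V : set A, annih V (fun _ => 0).
  by move=> V; split; [exact: dual_zero|].
have [allV|nall] := pselect (forall x, V0 x).
  exists 0, (fun _ => set0); split; [|split].
  - by case.
  - by case.
  move=> V MV _; apply: key => // i; exists (fun _ => 0); split => //.
  have phE : ph i = (fun _ => 0).
    by apply: funext => x; have [[_ h] _] := hph i; exact: h.
  by rewrite -phE; have [_ ?] := hph i.
have [x0 nx0] := (existsNP _).2 nall.
have [[V00 _] cV0] := MV0.
have d0 : 0 < dist x0 V0 by exact: closed_dist V00 cV0 nx0.
have P : forall i, exists ar : A * R, [/\ 0 < ar.2, Uset ar.2 ar.1 V0 &
    forall V, MaxA V -> ar.2 < dist ar.1 V -> exists chi, annih V chi /\ Ob i chi].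
  move=> i; have [[dp hp] Op] := hph i.
  have [_ hOe] := proj1 (hO i); have [e [e0 he]] := hOe _ Op.
  have [[y py]|allz] := pselect (exists y, ph i y != 0); last first.
    have phz : ph i = (fun _ => 0).
      apply: funext => x; apply/eqP; apply: contrapT => h; apply: allz.
      by exists x; apply/negP.
    exists (x0, dist x0 V0 / 2); split => /=.
    - by rewrite divr_gt0.
    - by split => //; lra.
    - by move=> V MV _; exists (fun _ => 0); split => //; rewrite -phz.
  have [a [a1 pa]] := norming refl dp py.
  have m0 := dnorm_pos dp py.
  set m := dnorm (ph i) in pa m0.
  set phin := dscale (m^-1)%:C (ph i).
  have dpn : dual phin by exact: dual_scale.
  have npn : dnorm phin <= 1.
    by rewrite dnormZ // cabR gtr0_norm ?invr_gt0 // mulVf ?gt_eqF.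
  have pna : phin a = 1.
    by rewrite /phin /Defs.dscale pa -rmorphM mulVf ?gt_eqF.
  have e2m : 0 < e / (2 * m) by rewrite divr_gt0 // mulr_gt0.
  have [del [del0 hdel]] := smulian sm a1 dpn npn pna e2m.
  set del' := Order.min del (1 / 2).
  have dl0 : 0 < del' by rewrite lt_min del0 /=; lra.
  have dl1 : del' <= del by rewrite ge_min lexx.
  have dl2 : del' <= 1 / 2 by rewrite ge_min lexx orbT.
  exists (a, 1 - del'); split => /=.
  - lra.
  - split => //; apply: (lt_le_trans (y := 1)); first lra.
    apply: dist_ge => // v Vv.
    have := dnorm_bound (a - v) dp; rewrite (linB (dual_lin dp)) (hp v Vv) subr0 pa.
    by rewrite cabR gtr0_norm // -/m -{1}(mulr1 m) ler_pM2l.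
  - move=> V [hV cV] rd.
    have [psi [[dq hq] nq qa]] := dist_functional a hV.
    have hre : 1 - del < complex.Re (psi a) by rewrite qa /=; lra.
    have hd := hdel psi dq nq hre.
    exists (dscale m%:C psi); split.
      split; first exact: dual_scale.
      by move=> v Vv; rewrite /Defs.dscale hq // mulr0.
    apply: he; first exact: dual_scale.
    have -> : dsub (dscale m%:C psi) (ph i) = dscale m%:C (dsub psi phin).
      apply: funext => x; rewrite /Defs.dsub /Defs.dscale /phin /Defs.dscale.
      by rewrite mulrBr mulrA -rmorphM mulfV ?gt_eqF // mul1r.
    rewrite dnormZ; last exact: dual_sub.
    rewrite cabR gtr0_norm //.
    apply: (le_lt_trans (y := m * (e / (2 * m)))); first by rewrite ler_wpM2l // ltW.
    have -> : m * (e / (2 * m)) = e / 2 by field; rewrite gt_eqF.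
    lra.
have [ar har] := choice P.
exists n, (fun i => Uset (ar i).2 (ar i).1); split; [|split].
- by move=> i; exists (ar i).1, (ar i).2; have [] := har i.
- by move=> i; have [] := har i.
move=> V MV hV; apply: key => // i.
have [_ _ h] := har i; apply: h => //.
by have [] := hV i.
Qed.

End Main.

Unset Implicit Arguments.
Local Close Scope complex_scope.

Theorem lemma7p27 (R : realType) (A : normedModType R[i]) :
  @reflexive_space _ A -> @frechet_smooth _ A ->
  forall W : set (set A),
    gen_open (@MaxA _ A) (@Usubbasis _ A) W <->
    exists UU : set (set (A -> R[i])),
      @LV_open _ A UU /\ W = [set V | @MaxA _ A V /\ UU (annih V)].
Proof.
move=> refl sm W; split; first exact: dir1.
by move=> [UU [hU ->]]; exact: dir2.
Qed.
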